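(* Let $\mathrm{OP}_n=\mathbb{C}[\partial\mathbf{x},E_1,\dots,E_{n-1}]\,\Delta(\mathbf{x})$. A polynomial $f(\mathbf{x},\mathbf{y})\in\mathbb{C}[\mathbf{x},\mathbf{y}]$ lies in $\mathrm{OP}_n^{\perp}$ if and only if $$f(\mathbf{x},\phi_\lambda(\mathbf{x}))\in(e_1(\mathbf{x}),\dots,e_n(\mathbf{x}))$$ identically in $\lambda$, i.e. in the ideal generated by $e_1(\mathbf{x}),\dots,e_n(\mathbf{x})$ in $\mathbb{C}[\mathbf{x},\lambda_1,\dots,\lambda_{n-1}]$, where $\phi_\lambda(z)=\lambda_{n-1}z^{n-1}+\cdots+\lambda_1z$ and $f(\mathbf{x},\phi_\lambda(\mathbf{x}))$ means $f$ with each $y_j$ replaced by $\phi_\lambda(x_j)$.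
   Context: $\mathbb{C}[\mathbf{x},\mathbf{y}]=\mathbb{C}[x_1,\dots,x_n,y_1,\dots,y_n]$; $E_k=\sum_{i=1}^n y_i\,\partial x_i^{\,k}$; $\Delta(\mathbf{x})=\prod_{i<j}(x_i-x_j)$; $e_i(\mathbf{x})$ is the $i$-th elementary symmetric polynomial; $\lambda_1,\dots,\lambda_{n-1}$ are indeterminates. The inner product on $\mathbb{C}[\mathbf{x},\mathbf{y}]$ is $(f,g)=\bigl(g(\partial\mathbf{x},\partial\mathbf{y})f(\mathbf{x},\mathbf{y})\bigr)|_{\mathbf{x},\mathbf{y}\mapsto 0}$, and $\perp$ denotes orthogonal complement with respect to it. *)

(* Defs.v *)
From HB Require Import structures.
From mathcomp Require Import all_boot all_order all_algebra.
From mathcomp Require Import mpoly.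
Set Implicit Arguments.
Unset Strict Implicit.
Unset Printing Implicit Defensive.
Import GRing.Theory Num.Theory.
Local Open Scope ring_scope.

Section OP.
Variables (C : numClosedFieldType) (n : nat).

Definition PXY := {mpoly C[n + n]}.

Definition xv (i : 'I_n) : PXY := 'X_(lshift n i).
Definition yv (i : 'I_n) : PXY := 'X_(rshift n i).

Definition dx (i : 'I_n) (p : PXY) : PXY := mderiv (lshift n i) p.

Definition Eop (k : nat) (p : PXY) : PXY :=
  \sum_(i < n) yv i * iter k (dx i) p.

Definition Delta : PXY :=
  \prod_(i < n) \prod_(j < n | (i < j)%N) (xv i - xv j).

Inductive in_OPalg : (PXY -> PXY) -> Prop :=
  | OPalg_scal (c : C) : in_OPalg (fun p => c *: p)
  | OPalg_dx (i : 'I_n) : in_OPalg (dx i)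
  | OPalg_E (k : nat) : (1 <= k)%N -> (k <= n.-1)%N -> in_OPalg (Eop k)
  | OPalg_add D1 D2 : in_OPalg D1 -> in_OPalg D2 -> in_OPalg (fun p => D1 p + D2 p)
  | OPalg_comp D1 D2 : in_OPalg D1 -> in_OPalg D2 -> in_OPalg (fun p => D1 (D2 p)).

Definition OP (g : PXY) : Prop := exists D, in_OPalg D /\ g = D Delta.

(* (f, g) = (g(dx, dy) f)(0) *)
Definition pairing (f g : PXY) : C :=
  (\sum_(m <- msupp g) g@_m *: mderivm m f).@[fun _ => 0].

Definition in_OP_perp (f : PXY) : Prop := forall g, OP g -> pairing f g = 0.

(* Target ring C[x_1..x_n, lambda_1..lambda_{n-1}] = {mpoly C[n + n.-1]}:
   x_i is  lshift n.-1 i,  lambda_{j+1} is  rshift n j  (j : 'I_n.-1). *)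
Definition PXL := {mpoly C[n + n.-1]}.

Definition xt (i : 'I_n) : PXL := 'X_(lshift n.-1 i).
Definition lam (j : 'I_n.-1) : PXL := 'X_(rshift n j).

Definition phi (z : PXL) : PXL := \sum_(j < n.-1) lam j * z ^+ j.+1.

Definition subst_var (v : 'I_(n + n)) : PXL :=
  match split v with
  | inl i => xt i
  | inr j => phi (xt j)
  end.

Definition subst_phi (f : PXY) : PXL :=
  f \mPo [tuple subst_var v | v < n + n].

Definition esym_x (k : nat) : PXL :=
  \sum_(h : {set 'I_n} | #|h| == k) \prod_(i in h) xt i.

Definition in_esym_ideal (h : PXL) : Prop :=
  exists q : 'I_n -> PXL, h = \sum_(i < n) q i * esym_x i.+1.

End OP.

(* Main.v *)
Require Import Defs.
From HB Require Import structures.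
From mathcomp Require Import all_boot all_order all_algebra all_fingroup.
From mathcomp Require Import mpoly ssrcomplements zify ring.
Set Implicit Arguments. Unset Strict Implicit. Unset Printing Implicit Defensive.
Import GRing.Theory Num.Theory.
Local Open Scope ring_scope.


Section Generic.
Variables (C : numClosedFieldType) (k : nat).
Implicit Types (p q h g : {mpoly C[k]}).

Lemma msupp_sum_bnd (V : zmodType) (F : 'X_{1..k} -> C -> V) p (K : nat) :
  (msize p <= K)%N -> (forall m, F m 0 = 0) ->
  \sum_(m <- msupp p) F m p@_m = \sum_(m : 'X_{1..k < K}) F m p@_m.
Proof.
move=> le_pK F0; set I : subFinType _ := 'X_{1..k < K}.
rewrite (big_mksub I) ?msupp_uniq //=; first last.
  by move=> x /msize_mdeg_lt /leq_trans; apply.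
by rewrite big_rmcond //= => j /memN_msupp_eq0 ->; rewrite F0.
Qed.

Lemma lin_ext (V : lmodType C) (F G : {mpoly C[k]} -> V) :
  (forall c p q, F (c *: p + q) = c *: F p + F q) ->
  (forall c p q, G (c *: p + q) = c *: G p + G q) ->
  (forall m, F 'X_[m] = G 'X_[m]) -> forall p, F p = G p.
Proof.
move=> HF HG HX; have F0 : F 0 = 0.
  have H := HF 1 0 0; rewrite scaler0 addr0 scale1r in H.
  by have := addrK (F 0) (F 0); rewrite -H subrr.
have G0 : G 0 = 0.
  have H := HG 1 0 0; rewrite scaler0 addr0 scale1r in H.
  by have := addrK (G 0) (G 0); rewrite -H subrr.
elim/mpolyind => [|c m p _ _ IH]; first by rewrite F0 G0.
by rewrite HF HG IH HX.
Qed.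

Definition Dop h g : {mpoly C[k]} := \sum_(m <- msupp h) h@_m *: g^`M[m].

Lemma DopE h g (K : nat) : (msize h <= K)%N ->
  Dop h g = \sum_(m : 'X_{1..k < K}) h@_m *: g^`M[m].
Proof. by move=> le; rewrite /Dop (@msupp_sum_bnd _ (fun m c => c *: g^`M[m]) h K le) // => m; rewrite scale0r. Qed.

Lemma DopD1 h1 h2 g : Dop (h1 + h2) g = Dop h1 g + Dop h2 g.
Proof.
pose K := (msize h1 + msize h2 + msize (h1 + h2)).+1.
have H1 : (msize h1 <= K)%N by rewrite /K; lia.
have H2 : (msize h2 <= K)%N by rewrite /K; lia.
have H3 : (msize (h1 + h2) <= K)%N by rewrite /K; lia.
rewrite !(@DopE _ _ K) //.
by rewrite -big_split /=; apply: eq_bigr => m _; rewrite mcoeffD scalerDl.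
Qed.

Lemma DopZ1 c h g : Dop (c *: h) g = c *: Dop h g.
Proof.
pose K := (msize h + msize (c *: h)).+1.
have H1 : (msize h <= K)%N by rewrite /K; lia.
have H2 : (msize (c *: h) <= K)%N by rewrite /K; lia.
rewrite !(@DopE _ _ K) //.
by rewrite scaler_sumr; apply: eq_bigr => m _; rewrite mcoeffZ scalerA.
Qed.

Lemma Dop01 g : Dop 0 g = 0.
Proof. by rewrite /Dop msupp0 big_nil. Qed.

Lemma DopD2 h g1 g2 : Dop h (g1 + g2) = Dop h g1 + Dop h g2.
Proof. by rewrite /Dop -big_split /=; apply: eq_bigr => m _; rewrite mderivmD scalerDr. Qed.

Lemma DopZ2 c h g : Dop h (c *: g) = c *: Dop h g.
Proof. by rewrite /Dop scaler_sumr; apply: eq_bigr => m _; rewrite mderivmZ !scalerA mulrC. Qed.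

Lemma Dop02 h : Dop h 0 = 0.
Proof. by rewrite /Dop big1 // => m _; rewrite raddf0 scaler0. Qed.

Lemma DopX m g : Dop 'X_[m] g = g^`M[m].
Proof. by rewrite /Dop msuppX big_seq1 mcoeffX eqxx scale1r. Qed.

Lemma Dop1 g : Dop 1 g = g.
Proof. by rewrite -mpolyX0 DopX mderivm0m. Qed.

Lemma DopXU i g : Dop 'X_i g = g^`M(i).
Proof. by rewrite DopX mderivmU1m. Qed.

Lemma DopC c g : Dop c%:MP g = c *: g.
Proof. by rewrite -[c%:MP]mulr1 mul_mpolyC DopZ1 Dop1. Qed.

Lemma DopXM m h g : Dop ('X_[m] * h) g = (Dop h g)^`M[m].
Proof.
elim/mpolyind: h => [|c m' p _ _ IH]; first by rewrite mulr0 !Dop01 raddf0.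
rewrite mulrDr DopD1 IH -scalerAr DopZ1 -mpolyXD DopX DopD1 DopZ1 DopX.
by rewrite mderivmD mderivmZ addmC mderivmDm.
Qed.

Lemma DopM h1 h2 g : Dop (h1 * h2) g = Dop h1 (Dop h2 g).
Proof.
elim/mpolyind: h1 => [|c m p _ _ IH]; first by rewrite mul0r !Dop01.
by rewrite mulrDl DopD1 IH -scalerAl DopZ1 DopXM DopD1 DopZ1 DopX.
Qed.

Lemma meval0E p : p.@[fun _ => 0] = p@_0.
Proof.
move: p; apply: (@lin_ext C^o (fun p => p.@[fun _ => 0]) (fun p => p@_0)).
- by move=> c p q; rewrite mevalD mevalZ.
- by move=> c p q; rewrite mcoeffD mcoeffZ.
move=> m; rewrite mevalX mcoeffX.
have [->|] := eqVneq m 0%MM.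
  by rewrite big1 // => i _; rewrite mnm0E expr0.
move=> nz; have [i hi] : exists i, m i != 0%N.
  apply/existsP; rewrite -negb_forall; apply: contra nz => /forallP H.
  by apply/eqP/mnmP => i; rewrite mnm0E; apply/eqP; apply: H.
by rewrite (bigD1 i) //= expr0n (negbTE hi) mul0r.
Qed.

Definition mfact (m : 'X_{1..k}) : nat := \prod_(i < k) (m i)`!.

Lemma Dop_eval_X m G : (Dop 'X_[m] G).@[fun _ => 0] = G@_m *+ mfact m.
Proof.
rewrite DopX meval0E mcoeff_mderivm addm0; congr (_ *+ _).
by apply: eq_bigr => i _; rewrite ffactnn.
Qed.

Lemma Dop_eval_sym h g : (Dop h g).@[fun _ => 0] = (Dop g h).@[fun _ => 0].
Proof.
move: h; apply: (@lin_ext C^o (fun h => (Dop h g).@[fun _ => 0]) (fun h => (Dop g h).@[fun _ => 0])).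
- by move=> c p q; rewrite DopD1 DopZ1 mevalD mevalZ.
- by move=> c p q; rewrite DopD2 DopZ2 mevalD mevalZ.
move=> a; move: g.
apply: (@lin_ext C^o (fun g => (Dop 'X_[a] g).@[fun _ => 0]) (fun g => (Dop g 'X_[a]).@[fun _ => 0])).
- by move=> c p q; rewrite DopD2 DopZ2 mevalD mevalZ.
- by move=> c p q; rewrite DopD1 DopZ1 mevalD mevalZ.
move=> b; rewrite !Dop_eval_X !mcoeffX eq_sym.
by case: eqP => [->|] //; rewrite !mul0rn.
Qed.

Lemma Dop_eval_zero G : (forall m, (Dop 'X_[m] G).@[fun _ => 0] = 0) -> G = 0.
Proof.
move=> H; apply/mpolyP => m; rewrite mcoeff0.
have := H m; rewrite Dop_eval_X => /eqP; rewrite -mulr_natr mulf_eq0 pnatr_eq0.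
have : (0 < mfact m)%N by rewrite /mfact prodn_gt0 // => i; rewrite fact_gt0.
by move=> pos /orP[/eqP|] //; rewrite -(prednK pos).
Qed.

End Generic.

Section Chain.
Variables (C : numClosedFieldType).

Lemma mpoly_gen_ind (k : nat) (P : {mpoly C[k]} -> Prop) :
  (forall c, P c%:MP) -> (forall i, P 'X_i) ->
  (forall p q, P p -> P q -> P (p + q)) -> (forall p q, P p -> P q -> P (p * q)) ->
  forall p, P p.
Proof.
move=> HC HX HD HM p; rewrite [p]mpolyE.
apply: (big_ind P _ HD) => //; first by have := HC 0; rewrite mpolyC0.
move=> m _; rewrite -mul_mpolyC; apply: (HM) => //.
rewrite mpolyXE_id; apply: (big_ind P _ HM) => //; first by rewrite -mpolyC1.
move=> i _; move: (m i) => e; elim: e => [|e IHe]; first by rewrite expr0 -mpolyC1.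
by rewrite exprS; apply: (HM).
Qed.

Lemma mpoly_rmorph_eq (k : nat) (S : nzRingType) (f g : {rmorphism {mpoly C[k]} -> S}) :
  (forall c, f c%:MP = g c%:MP) -> (forall i, f 'X_i = g 'X_i) -> forall p, f p = g p.
Proof.
move=> HC HX; elim/mpoly_gen_ind => [c|i|p q Hp Hq|p q Hp Hq]; rewrite ?HC ?HX //.
- by rewrite !rmorphD /= Hp Hq.
- by rewrite !rmorphM /= Hp Hq.
Qed.

Lemma mderivXU (k : nat) (i i' : 'I_k) : ('X_i : {mpoly C[k]})^`M(i') = ((i == i')%:R)%:MP.
Proof.
rewrite mderivX mnm1E; case: eqP => [<-|_]; last by rewrite scale0r mpolyC0.
have -> : (U_(i) - U_(i) = 0)%MM by apply/mnmP => l; rewrite mnmBE mnm0E subnn.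
by rewrite mpolyX0 scale1r mpolyC1.
Qed.

Lemma mderiv_comp (k m : nat) (lq : k.-tuple {mpoly C[m]}) (j : 'I_m) (p : {mpoly C[k]}) :
  (p \mPo lq)^`M(j) = \sum_(i < k) (p^`M(i) \mPo lq) * (tnth lq i)^`M(j).
Proof.
elim/mpoly_gen_ind: p => [c|i|p q Hp Hq|p q Hp Hq].
- rewrite comp_mpolyC mderivC big1 // => i _; by rewrite mderivC comp_mpoly0 mul0r.
- rewrite comp_mpolyXU (bigD1 i) //= big1 => [|i' ne].
    by rewrite mderivXU eqxx comp_mpoly1 mul1r addr0 (tnth_nth 0).
  by rewrite mderivXU eq_sym (negbTE ne) comp_mpoly0 mul0r.
- rewrite comp_mpolyD mderivD Hp Hq -big_split /=; apply: eq_bigr => i _.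
  by rewrite mderivD comp_mpolyD mulrDl.
- rewrite rmorphM mderivM Hp Hq mulr_suml mulr_sumr -big_split /=; apply: eq_bigr => i _.
  rewrite mderivM comp_mpolyD !rmorphM mulrDl.
  by rewrite -!mulrA; congr (_ * _ + _); rewrite mulrC.
Qed.

End Chain.

Section Antisym.
Variables (C : numClosedFieldType).

Definition Vdm n : {mpoly C[n]} := \prod_(i < n) \prod_(j < n | (i < j)%N) ('X_i - 'X_j).

Definition inI n (h : {mpoly C[n]}) :=
  exists q : 'I_n -> {mpoly C[n]}, h = \sum_(i < n) q i * mesym n C i.+1.

Lemma msym_XU n (s : 'S_n) i : msym s ('X_i : {mpoly C[n]}) = 'X_(s i).
Proof. by rewrite /msym mmapX mmap1U. Qed.

Lemma msym_mderiv n (s : 'S_n) i (p : {mpoly C[n]}) :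
  msym s (p^`M(i)) = (msym s p)^`M(s i).
Proof.
apply/mpolyP => m; rewrite mcoeff_sym !mcoeff_mderiv mcoeff_sym mnmE.
congr (_@__ *+ _); apply/mnmP => l; rewrite !mnmE; congr (_ + _)%N; by case: eqP => [->|ne]; [rewrite eqxx | case: eqP => // /perm_inj].
Qed.

Lemma msymC n (s : 'S_n) c : msym s (c%:MP : {mpoly C[n]}) = c%:MP.
Proof. by rewrite -[c%:MP]mulr1 mul_mpolyC msymZ msym1. Qed.

Lemma msym_Dop n (s : 'S_n) (h g : {mpoly C[n]}) :
  msym s (Dop h g) = Dop (msym s h) (msym s g).
Proof.
elim/mpoly_gen_ind: h g => [c|i|p q Hp Hq|p q Hp Hq] g.
- by rewrite !DopC msymZ msymC DopC.
- by rewrite msym_XU !DopXU msym_mderiv.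
- by rewrite DopD1 !msymD Hp Hq DopD1.
- by rewrite DopM Hp Hq msymM DopM.
Qed.

Lemma msym_Vandermonde n (s : 'S_n) :
  msym s (\det (Vandermonde n (\row_j ('X_j : {mpoly C[n]})))) =
  (-1) ^+ s * \det (Vandermonde n (\row_j ('X_j : {mpoly C[n]}))).
Proof.
rewrite -det_map_mx.
have -> : map_mx (msym s) (Vandermonde n (\row_j ('X_j : {mpoly C[n]}))) =
   col_perm s (Vandermonde n (\row_j ('X_j : {mpoly C[n]}))).
  by apply/matrixP => i j; rewrite !mxE rmorphXn /= ?mxE msym_XU ?mxE.
by rewrite col_permE det_mulmx det_perm odd_permV mulrC.
Qed.

Lemma Vdm_det n : Vdm n = (\prod_(i < n) \prod_(j < n | (i < j)%N) (-1)) *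
   \det (Vandermonde n (\row_j ('X_j : {mpoly C[n]}))).
Proof.
rewrite det_Vandermonde /Vdm -big_split /=; apply: eq_bigr => i _.
rewrite -big_split /=; apply: eq_bigr => j _.
by rewrite !mxE mulN1r opprB.
Qed.

Lemma Vdm_antisym n (a b : 'I_n) : a != b -> msym (tperm a b) (Vdm n) = - Vdm n.
Proof.
move=> nab; rewrite Vdm_det msymM msym_Vandermonde odd_tperm nab expr1.
rewrite rmorph_prod /=; under eq_bigr do rewrite rmorph_prod /=.
under eq_bigr do under eq_bigr do rewrite rmorphN1.
by rewrite mulN1r mulrN.
Qed.

Lemma mcoeff_Dop n (h g : {mpoly C[n]}) m : (Dop h g)@_m =
  \sum_(a <- msupp h) h@_a * (g@_(a + m) *+ \prod_(i < n) ((a + m)%MM i)^_(a i)).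
Proof.
rewrite /Dop; elim: (msupp h) => [|a s IH]; first by rewrite !big_nil mcoeff0.
by rewrite !big_cons mcoeffD IH mcoeffZ mcoeff_mderivm.
Qed.

Lemma Dop_coeff_nz n (h g : {mpoly C[n]}) m : (Dop h g)@_m != 0 ->
  exists2 a, a \in msupp h & g@_(a + m) != 0.
Proof.
rewrite mcoeff_Dop => nz.
have /hasP[a ha nza] : has (fun a => g@_(a + m) != 0) (msupp h).
  apply: contraNT nz => /hasPn H; rewrite big1_seq // => a /andP[_ ha].
  by move: (H a ha); rewrite negbK => /eqP ->; rewrite mul0rn mulr0.
by exists a.
Qed.


Lemma Vdm_homog n : Vdm n \is (\sum_(i < n) \sum_(j < n | (i < j)%N) 1)%N.-homog.
Proof.
rewrite /Vdm; elim/big_rec2: _ => [|i d p _ Hp]; first exact: dhomog1.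
apply: dhomogM => //.
elim/big_rec2: _ => [|j e q _ Hq]; first exact: dhomog1.
apply: dhomogM => //.
by apply: rpredB; rewrite dhomogX; apply/mdeg1P; eexists.
Qed.

Lemma count_pairs n : (\sum_(i < n) \sum_(j < n | (i < j)%N) 1 = \sum_(i < n) i)%N.
Proof.
rewrite (exchange_big_dep predT) //=; apply: eq_bigr => j _.
rewrite -(@big_ord_widen_cond _ _ _ j n xpredT (fun _ => 1%N)); last exact: ltnW.
by rewrite sum1_card card_ord.
Qed.

Lemma inj_sum_ge n (f : 'I_n -> nat) : injective f ->
  (\sum_(i < n) i <= \sum_(i < n) f i)%N.
Proof.
elim: n f => [|n IH] f inj; first by rewrite !big_ord0.
pose i0 := [arg max_(i > ord0) f i].
have Hmax : forall i, (f i <= f i0)%N.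
  by rewrite /i0; case: arg_maxnP => //= j _ H i; exact: H.
have Hn : (n <= f i0)%N.
  pose g (i : 'I_n.+1) : 'I_(f i0).+1 := Ordinal (Hmax i : (f i < (f i0).+1)%N).
  have : injective g by move=> a b /(congr1 val) /= /inj.
  by move/leq_card; rewrite !card_ord ltnS.
rewrite [X in (X <= _)%N]big_ord_recr /= [X in (_ <= X)%N](bigD1_ord i0) //=.
rewrite [(f i0 + _)%N]addnC; apply: leq_add => //.
apply: IH => a b /inj; exact: lift_inj.
Qed.

Lemma Dop_mesym_Vdm n k : (1 <= k)%N -> Dop (mesym n C k) (Vdm n) = 0.
Proof.
move=> k1; set A := Dop _ _.
have antiA a b : a != b -> msym (tperm a b) A = - A.
  move=> nab; rewrite /A msym_Dop (issymP _ (mesym_sym n C k)) Vdm_antisym //.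
  by rewrite -scaleN1r DopZ2 scaleN1r.
apply/mpolyP => m; rewrite mcoeff0; apply/eqP; apply: contraT => nz.
have inj : injective (fun i => m i).
  move=> a b /= eqab; apply/eqP; apply: contraT => nab.
  have := congr1 (mcoeff m) (antiA a b nab); rewrite mcoeff_sym mcoeffN.
  have -> : [multinom m (tperm a b i) | i < n] = m.
    apply/mnmP => l; rewrite mnmE; case: tpermP => [->|->|] //.
  move=> /eqP; rewrite -subr_eq0 opprK -mulr2n mulrn_eq0 /=.
  by rewrite (negbTE nz).
have [a ha nza] := Dop_coeff_nz nz.
move: ha; rewrite mem_msupp_mesym /mechar => /andP[/eqP dega _].
have H : mdeg (a + m)%MM = (\sum_(i < n) \sum_(j < n | (i < j)%N) 1)%N.
  apply/eqP; apply: contraNT nza => ne.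
  by rewrite (dhomog_nemf_coeff (Vdm_homog n) ne).
rewrite mdegD dega count_pairs in H.
have := inj_sum_ge inj; rewrite -mdegE -H; lia.
Qed.

Lemma ann_of_I n (h : {mpoly C[n]}) : inI h -> Dop h (Vdm n) = 0.
Proof.
case=> q ->; elim/big_rec: _ => [|i x _ Hx]; first by rewrite Dop01.
by rewrite DopD1 Hx addr0 DopM Dop_mesym_Vdm // Dop02.
Qed.

End Antisym.

Section IdealFacts.
Variables (C : numClosedFieldType) (n : nat).
Implicit Types (h p : {mpoly C[n]}).

Lemma inI0 : inI (0 : {mpoly C[n]}).
Proof. by exists (fun _ => 0); rewrite big1 // => i _; rewrite mul0r. Qed.

Lemma inID h p : inI h -> inI p -> inI (h + p).
Proof.
case=> q1 -> [q2 ->]; exists (fun i => q1 i + q2 i).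
by rewrite -big_split; apply: eq_bigr => i _; rewrite mulrDl.
Qed.

Lemma inIMl p h : inI h -> inI (p * h).
Proof.
case=> q ->; exists (fun i => p * q i).
by rewrite mulr_sumr; apply: eq_bigr => i _; rewrite mulrA.
Qed.

Lemma inIN h : inI h -> inI (- h).
Proof. by move=> H; rewrite -mulN1r; apply: inIMl. Qed.

Lemma inIB h p : inI h -> inI p -> inI (h - p).
Proof. by move=> ? ?; apply: inID => //; apply: inIN. Qed.

Lemma inI_sum (I : Type) (r : seq I) (F : I -> {mpoly C[n]}) :
  (forall i, inI (F i)) -> inI (\sum_(i <- r) F i).
Proof. by move=> H; elim/big_rec: _ => [|i x _ Hx]; [exact: inI0 | apply: inID]. Qed.

Lemma inI_mesym k : (1 <= k <= n)%N -> inI (mesym n C k).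
Proof.
case/andP=> k1 kn; have kn' : (k.-1 < n)%N by lia.
exists (fun i => if i == Ordinal kn' then 1 else 0).
rewrite (bigD1 (Ordinal kn')) //= eqxx mul1r big1 ?addr0.
  by rewrite prednK.
by move=> i /negbTE ->; rewrite mul0r.
Qed.

End IdealFacts.

Section Muni.
Variables (C : numClosedFieldType) (n : nat).

Local Notation t := ('X_ord_max : {mpoly C[n.+1]}).
Local Notation w := (@mwiden n C).
Local Notation wd := (widen_ord (leqnSn n)).

Lemma ord_split (i : 'I_n.+1) : i = ord_max \/ exists j : 'I_n, i = wd j.
Proof.
case: (unliftP ord_max i) => [j ->|->]; last by left.
by right; exists j; apply: val_inj; rewrite /= /bump leqNgt ltn_ord.
Qed.

Lemma wd_neq_max (j : 'I_n) : (wd j == ord_max) = false.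
Proof. by apply/negbTE; rewrite -val_eqE /= neq_ltn ltn_ord. Qed.

Lemma wd_eq (i j : 'I_n) : (wd i == wd j) = (i == j).
Proof. by rewrite -val_eqE /= val_eqE. Qed.

Lemma muniX m : muni ('X_[m] : {mpoly C[n.+1]}) =
  'X_[[multinom m (wd i) | i < n]] *: 'X^(m ord_max).
Proof. by rewrite muniE msuppX big_seq1 mcoeffX eqxx scale1r. Qed.

Lemma muni_w g : muni (w g) = g%:P.
Proof.
elim/mpolyind: g => [|c m p _ _ IH]; first by rewrite raddf0 /= muni0.
rewrite mwidenD muniD IH mwidenZ muniZ mwidenX muniX mnmwiden_ordmax expr0.
rewrite polyCD alg_polyC -mul_polyC -polyCM mul_mpolyC; congr ((c *: 'X_[_])%:P + _).
by apply/mnmP => i; rewrite mnmE mnmwiden_widen.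
Qed.

Lemma muni_t : muni t = 'X.
Proof.
rewrite muniX mnm1E eqxx expr1.
have -> : [multinom (U_(ord_max) : 'X_{1..n.+1})%MM (wd i) | i < n] = 0%MM.
  by apply/mnmP => i; rewrite mnmE mnm1E mnm0E eq_sym wd_neq_max.
by rewrite mpolyX0 scale1r.
Qed.

Lemma w_XU (i : 'I_n) : w 'X_i = 'X_(wd i).
Proof. by rewrite mwidenX mnmwiden1. Qed.

Lemma map_poly_scaleXn (f : {mpoly C[n]} -> {mpoly C[n]}) c k :
  f 0 = 0 -> map_poly f (c *: 'X^k) = f c *: 'X^k.
Proof.
move=> f0; apply/polyP => l; rewrite coef_map_id0 // !coefZ coefXn.
by case: (l == k); rewrite ?mulr1 ?mulr0.
Qed.

Lemma map_poly_mderivZ i c (P : {poly {mpoly C[n]}}) :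
  map_poly (mderiv i) (c%:MP *: P) = c%:MP *: map_poly (mderiv i) P.
Proof.
apply/polyP => l; rewrite coef_map_id0 ?raddf0 // !coefZ coef_map_id0 ?raddf0 //.
by rewrite mderiv_mulC.
Qed.

Lemma muni_dw (i : 'I_n) (p : {mpoly C[n.+1]}) :
  muni (p^`M(wd i)) = map_poly (mderiv i) (muni p).
Proof.
elim/mpolyind: p => [|c m p _ _ IH]; first by rewrite !raddf0 ?muni0 ?map_poly0 ?raddf0.
rewrite mderivD mderivZ !muniD !muniZ IH raddfD /= map_poly_mderivZ; congr (_ *: _ + _).
rewrite mderivX muniZ !muniX map_poly_scaleXn ?raddf0 // mderivX !mnmE wd_neq_max subn0.
rewrite scalerA mul_mpolyC; congr ((_ *: 'X_[_]) *: _).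
by apply/mnmP => l; rewrite !mnmE wd_eq.
Qed.

Lemma muni_dt (p : {mpoly C[n.+1]}) :
  muni (p^`M(ord_max)) = (muni p)^`().
Proof.
elim/mpolyind: p => [|c m p _ _ IH]; first by rewrite !raddf0 ?muni0 ?deriv0 ?raddf0.
rewrite mderivD mderivZ !muniD !muniZ IH derivD derivZ; congr (_ *: _ + _).
rewrite mderivX muniZ !muniX derivZ derivXn mnmBE mnm1E eqxx subn1.
rewrite -scalerMnr -scaler_nat -mpolyC_nat scalerA mul_mpolyC [RHS]scalerA mul_mpolyC.
congr ((_ *: 'X_[_]) *: _).
apply/mnmP => l; rewrite mnmE [in RHS]mnmE mnmBE mnm1E.
by rewrite eq_sym wd_neq_max subn0.
Qed.

Lemma muni_Dop_w (g : {mpoly C[n]}) (p : {mpoly C[n.+1]}) :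
  muni (Dop (w g) p) = map_poly (Dop g) (muni p).
Proof.
elim/mpoly_gen_ind: g p => [c|i|a b Ha Hb|a b Ha Hb] p.
- rewrite mwidenC !DopC muniZ; apply/polyP => l.
  by rewrite coefZ coef_map_id0 ?Dop02 // DopC mul_mpolyC.
- rewrite w_XU !DopXU muni_dw; apply: eq_map_poly => x; by rewrite DopXU.
- rewrite mwidenD DopD1 muniD Ha Hb; apply/polyP => l.
  by rewrite coefD !coef_map_id0 ?Dop02 // DopD1.
- rewrite mwidenM DopM Ha Hb; apply/polyP => l.
  by rewrite !coef_map_id0 ?Dop02 // DopM.
Qed.

Lemma muni_Dop_t j (p : {mpoly C[n.+1]}) : muni (Dop (t ^+ j) p) = (muni p)^`(j).
Proof.
elim: j => [|j IH]; first by rewrite expr0 Dop1 derivn0.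
by rewrite exprS DopM DopXU muni_dt IH derivnS.
Qed.


Lemma size_muni_Dop (h p : {mpoly C[n.+1]}) : (size (muni (Dop h p)) <= size (muni p))%N.
Proof.
elim/mpoly_gen_ind: h p => [c|i|a b Ha Hb|a b Ha Hb] p.
- rewrite DopC muniZ. exact: size_scale_leq.
- rewrite DopXU; case: (ord_split i) => [->|[j ->]].
    rewrite muni_dt. set P := muni p. rewrite /deriv. apply: leq_trans (size_poly _ _) _. exact: leq_pred.
  rewrite muni_dw. set P := muni p. rewrite /map_poly. exact: size_poly.
- rewrite DopD1 muniD. apply: (leq_trans (size_polyD _ _)). rewrite geq_max. by apply/andP; split.
- rewrite DopM. exact: (leq_trans (Ha _) (Hb _)).
Qed.
End Muni.

Section CoreStep.
Variables (C : numClosedFieldType) (n : nat).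

Local Notation t := ('X_ord_max : {mpoly C[n.+1]}).
Local Notation w := (@mwiden n C).
Local Notation wd := (widen_ord (leqnSn n)).

Lemma Vdm_split : Vdm C n.+1 = w (Vdm C n) * \prod_(i < n) ('X_(wd i) - t).
Proof.
rewrite /Vdm big_ord_recr /= [X in _ * X]big1 ?mulr1; last first.
  by move=> j; rewrite /= ltnNge -ltnS ltn_ord.
rewrite rmorph_prod -big_split /=; apply: eq_bigr => i _.
rewrite big_mkcond big_ord_recr /= ltn_ord -big_mkcond /= rmorph_prod /=.
by congr (_ * _); apply: eq_bigr => j _; rewrite rmorphB /= !w_XU.
Qed.

Definition Qp : {poly {mpoly C[n]}} := \prod_(i < n) ('X - ('X_i)%:P).

Lemma size_Qp : size Qp = n.+1.
Proof. by rewrite /Qp size_prod_XsubC /index_enum -enumT size_enum_ord. Qed.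

Lemma coef_Qp : Qp`_n = 1.
Proof.
have := lead_coef_prod_XsubC (index_enum 'I_n) xpredT (fun i => ('X_i : {mpoly C[n]})).
by rewrite /lead_coef -/Qp size_Qp.
Qed.

Lemma muni_Vdm : muni (Vdm C n.+1) = (Vdm C n * (-1) ^+ n) *: Qp.
Proof.
rewrite Vdm_split rmorphM /= muni_w.
have -> : muni (\prod_(i < n) ('X_(wd i) - t)) = (-1) ^+ n * Qp.
  rewrite rmorph_prod /=.
  have -> : (-1) ^+ n = \prod_(i < n) (-1 : {poly {mpoly C[n]}}) by rewrite prodr_const card_ord.
  rewrite /Qp -big_split /=; apply: eq_bigr => i _.
  by rewrite rmorphB /= -w_XU muni_w muni_t mulN1r opprB.
by rewrite -mul_polyC polyCM mulrA rmorphXn /= rmorphN1.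
Qed.

Lemma coef_muni_Vdm : (muni (Vdm C n.+1))`_n = Vdm C n * (-1) ^+ n.
Proof. by rewrite muni_Vdm coefZ coef_Qp mulr1. Qed.

Lemma size_muni_Vdm : (size (muni (Vdm C n.+1)) <= n.+1)%N.
Proof. by rewrite muni_Vdm -size_Qp size_scale_leq. Qed.

Lemma ws_minus k : (k <= n.+1)%N -> inI (w (mesym n C k) - (-t) ^+ k).
Proof.
elim: k => [|k IH] hk; first by rewrite mesym0E mwiden1 expr0 subrr; apply: inI0.
have E := mesymSS C n k.
have -> : w (mesym n C k.+1) - (-t) ^+ k.+1 =
          mesym n.+1 C k.+1 - t * (w (mesym n C k) - (-t) ^+ k).
  by rewrite E exprS; ring.
apply: inIB; first by apply: inI_mesym; lia.
by apply: inIMl; apply: IH; lia.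
Qed.

Lemma t_pow : inI (t ^+ n.+1).
Proof.
have := ws_minus (leqnn n.+1); rewrite mesym_geqnE // raddf0 sub0r => /inIN.
rewrite opprK exprNn => H; have := inIMl ((-1) ^+ n.+1) H.
by rewrite mulrA -exprMn mulrNN mulr1 expr1n mul1r.
Qed.

Lemma decomp (h : {mpoly C[n.+1]}) : exists h0 h1, h = w h0 + t * h1.
Proof.
elim/mpoly_gen_ind: h => [c|i|a b [a0 [a1 ->]] [b0 [b1 ->]]|a b [a0 [a1 ->]] [b0 [b1 ->]]].
- by exists c%:MP, 0; rewrite mwidenC mulr0 addr0.
- case: (ord_split i) => [->|[j ->]].
    by exists 0, 1; rewrite raddf0 add0r mulr1.
  by exists 'X_j, 0; rewrite w_XU mulr0 addr0.
- by exists (a0 + b0), (a1 + b1); rewrite raddfD /=; ring.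
- exists (a0 * b0), (a1 * w b0 + w a0 * b1 + t * a1 * b1).
  by rewrite rmorphM /=; ring.
Qed.

Lemma core_step (IHn : forall h : {mpoly C[n]}, Dop h (Vdm C n) = 0 -> inI h) j :
  (j <= n)%N ->
  (forall h, Dop (t ^+ j.+1 * h) (Vdm C n.+1) = 0 -> inI (t ^+ j.+1 * h)) ->
  forall h, Dop (t ^+ j * h) (Vdm C n.+1) = 0 -> inI (t ^+ j * h).
Proof.
move=> hj G h E.
have [h0 [h1 eh]] := decomp h.
have Dh0 : Dop h0 (Vdm C n) = 0.
  have E2 := E.
  have eq1 : t ^+ j * h = t ^+ j * w h0 + t ^+ j.+1 * h1 by rewrite eh exprS; ring.
  rewrite eq1 DopD1 !DopM in E2.
  have := congr1 (fun P => (muni P)`_(n - j)) E2.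
  rewrite /= muniD coefD !muni_Dop_t muni0.
  have sP2 := leq_trans (size_muni_Dop h1 (Vdm C n.+1)) size_muni_Vdm.
  have cV := coef_muni_Vdm.
  move: (muni (Dop h1 _)) sP2 => P2 sP2.
  rewrite muni_Dop_w; move: (muni (Vdm C n.+1)) cV => PV cV.
  rewrite coef0 !coef_derivn (subnKC hj) coef_map_id0 ?Dop02 // cV.
  rewrite (@nth_default _ 0 P2 (j.+1 + (n - j))); last by apply: leq_trans sP2 _; lia.
  rewrite mul0rn addr0.
  have -> : Vdm C n * (-1) ^+ n = ((-1) ^+ n : C) *: Vdm C n.
    by rewrite -mul_mpolyC rmorphXn rmorphN1 mulrC.
  rewrite DopZ2 -scaler_nat scalerA => /eqP; rewrite scaler_eq0 mulf_eq0 signr_eq0 pnatr_eq0.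
  have nz : (n ^_ j == 0)%N = false by apply/negbTE; rewrite -lt0n ffact_gt0.
  by rewrite nz /= => /eqP.
have [q eq] := IHn _ Dh0.
pose h' := h1 - \sum_(i < n) w (q i) * (-t) ^+ i.
have S1 : \sum_(i < n) w (q i) * (w (mesym n C i.+1) - (-t) ^+ i.+1) =
          \sum_(i < n) w (q i * mesym n C i.+1) + t * \sum_(i < n) w (q i) * (-t) ^+ i.
  rewrite mulr_sumr -big_split /=; apply: eq_bigr => i _; rewrite rmorphM /= exprS; ring.
have eqh : t ^+ j * h = t ^+ j.+1 * h' +
     t ^+ j * \sum_(i < n) w (q i) * (w (mesym n C i.+1) - (-t) ^+ i.+1).
  rewrite eh eq rmorph_sum S1 /h' exprS; ring.
have Hin : inI (t ^+ j * \sum_(i < n) w (q i) * (w (mesym n C i.+1) - (-t) ^+ i.+1)).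
  apply: inIMl; apply: inI_sum => i; apply: inIMl; apply: ws_minus.
  by have := ltn_ord i; lia.
have : Dop (t ^+ j.+1 * h') (Vdm C n.+1) = 0.
  have -> : t ^+ j.+1 * h' = t ^+ j * h -
     t ^+ j * \sum_(i < n) w (q i) * (w (mesym n C i.+1) - (-t) ^+ i.+1).
    by rewrite eqh addrK.
  by rewrite DopD1 -scaleN1r DopZ1 E (ann_of_I Hin) scaler0 addr0.
move/G => Hin'; rewrite eqh; exact: inID.
Qed.

End CoreStep.

Section Core.
Variables (C : numClosedFieldType).

Lemma core_b n (h : {mpoly C[n]}) : Dop h (Vdm C n) = 0 -> inI h.
Proof.
elim: n h => [|n IHn] h.
  rewrite /Vdm big_ord0 => E; suff -> : h = 0 by apply: inI0.
  move: E; rewrite [X in Dop X]nvar0_mpolyC DopC => E.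
  by rewrite [h]nvar0_mpolyC; move: E; rewrite -mul_mpolyC mulr1.
have G : forall d j, (j + d = n.+1)%N -> forall h : {mpoly C[n.+1]},
    Dop ('X_ord_max ^+ j * h) (Vdm C n.+1) = 0 -> inI ('X_ord_max ^+ j * h).
  elim=> [|d IHd] j hjd h0.
    rewrite addn0 in hjd; subst j => _; rewrite mulrC; apply: inIMl; exact: t_pow.
  apply: core_step => //; first by lia.
  by apply: IHd; lia.
by have := G n.+1 0%N erefl h; rewrite expr0 mul1r; apply.
Qed.

Theorem core n (h : {mpoly C[n]}) : Dop h (Vdm C n) = 0 <-> inI h.
Proof. by split; [exact: core_b | exact: ann_of_I]. Qed.

End Core.

Lemma mpoly_fun_eq (C : numClosedFieldType) k (S : nzRingType) (F G : {mpoly C[k]} -> S) :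
  (forall p q, F (p + q) = F p + F q) -> (forall p q, F (p * q) = F p * F q) ->
  (forall p q, G (p + q) = G p + G q) -> (forall p q, G (p * q) = G p * G q) ->
  (forall c, F c%:MP = G c%:MP) -> (forall i, F 'X_i = G 'X_i) -> forall p, F p = G p.
Proof.
move=> FD FM GD GM HC HX; elim/mpoly_gen_ind => [c|i|p q Hp Hq|p q Hp Hq] //.
- by rewrite FD GD Hp Hq.
- by rewrite FM GM Hp Hq.
Qed.

Lemma split_l m k (i : 'I_m) : split (lshift k i) = inl i.
Proof. exact: (unsplitK (inl _ i)). Qed.
Lemma split_r m k (i : 'I_k) : split (rshift m i) = inr i.
Proof. exact: (unsplitK (inr _ i)). Qed.

Section Glue.
Variables (C : numClosedFieldType) (n : nat).

Local Notation PY := {mpoly C[n + n]}.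
Local Notation PL := {mpoly C[n + n.-1]}.
Local Notation Pn := {mpoly C[n]}.

Definition iY_t : n.-tuple PY := [tuple (xv C i : PY) | i < n].
Definition rY_t : (n + n).-tuple Pn :=
  [tuple (match split v with inl i => 'X_i | inr _ => 0 end) | v < n + n].
Definition iL_t : n.-tuple PL := [tuple (xt C i : PL) | i < n].
Definition rL_t : (n + n.-1).-tuple Pn :=
  [tuple (match split v with inl i => 'X_i | inr _ => 0 end) | v < n + n.-1].
Definition sp_t : (n + n).-tuple PL := [tuple subst_var C v | v < n + n].

Local Notation iY := (comp_mpoly iY_t).
Local Notation rY := (comp_mpoly rY_t).
Local Notation iL := (comp_mpoly iL_t).
Local Notation rL := (comp_mpoly rL_t).

Lemma subst_phiE (f : PY) : subst_phi f = f \mPo sp_t.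
Proof. by []. Qed.

Lemma pairingE (f g : PY) : pairing f g = (Dop g f).@[fun _ => 0].
Proof. by []. Qed.

Lemma compXU k m (lq : k.-tuple {mpoly C[m]}) i : 'X_i \mPo lq = tnth lq i.
Proof. by rewrite comp_mpolyXU (tnth_nth 0). Qed.

Lemma iY_X i : iY 'X_i = xv C i.
Proof. by rewrite compXU tnth_mktuple. Qed.
Lemma rY_xv i : rY (xv C i) = 'X_i.
Proof. by rewrite /xv compXU tnth_mktuple split_l. Qed.
Lemma rY_yv i : rY (yv C i) = 0.
Proof. by rewrite /yv compXU tnth_mktuple split_r. Qed.
Lemma iL_X i : iL 'X_i = xt C i.
Proof. by rewrite compXU tnth_mktuple. Qed.
Lemma rL_xt i : rL (xt C i) = 'X_i.
Proof. by rewrite /xt compXU tnth_mktuple split_l. Qed.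
Lemma rL_lam j : rL (lam C j) = 0.
Proof. by rewrite /lam compXU tnth_mktuple split_r. Qed.

Lemma rY_iY p : rY (iY p) = p.
Proof.
apply: (@mpoly_fun_eq C n _ (fun p => rY (iY p)) id) => //=.
- by move=> p1 p2; rewrite !rmorphD.
- by move=> p1 p2; rewrite !rmorphM.
- by move=> c; rewrite !comp_mpolyC.
- by move=> i; rewrite iY_X rY_xv.
Qed.

Lemma rL_iL p : rL (iL p) = p.
Proof.
apply: (@mpoly_fun_eq C n _ (fun p => rL (iL p)) id) => //=.
- by move=> p1 p2; rewrite !rmorphD.
- by move=> p1 p2; rewrite !rmorphM.
- by move=> c; rewrite !comp_mpolyC.
- by move=> i; rewrite iL_X rL_xt.
Qed.

Lemma rL_phi (z : PL) : rL (phi z) = 0.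
Proof.
rewrite /phi rmorph_sum big1 // => j _.
by rewrite rmorphM /= rL_lam mul0r.
Qed.

Lemma rL_subst f : rL (subst_phi f) = rY f.
Proof.
apply: (@mpoly_fun_eq C (n + n) _ (fun f => rL (subst_phi f)) (fun f => rY f)) => //=.
- by move=> p1 p2; rewrite !subst_phiE !rmorphD.
- by move=> p1 p2; rewrite !subst_phiE !rmorphM.
- by move=> p1 p2; rewrite !rmorphD.
- by move=> p1 p2; rewrite !rmorphM.
- by move=> c; rewrite subst_phiE !comp_mpolyC.
move=> v; rewrite subst_phiE !compXU !tnth_mktuple /subst_var.
by case: (split v) => [i|j]; rewrite ?rL_xt ?rL_phi.
Qed.

Lemma iY_Vdm : iY (Vdm C n) = Delta C n.
Proof.
rewrite /Vdm /Delta rmorph_prod; apply: eq_bigr => i _.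
rewrite rmorph_prod; apply: eq_bigr => j _.
by rewrite rmorphB /= !iY_X.
Qed.

Lemma iL_mesym k : iL (mesym n C k) = esym_x C n k.
Proof.
rewrite mesymE rmorph_sum /esym_x; apply: eq_bigr => h _.
rewrite /= (comp_mpolyX (mesym1 h) iL_t) (big_mkcond (fun i => i \in h)) /=; apply: eq_bigr => i _.
by rewrite tnth_mktuple mnmE; case: (i \in h); rewrite ?expr1 ?expr0.
Qed.

Lemma rY_dx (f : PY) i : rY (f^`M(lshift n i)) = (rY f)^`M(i).
Proof.
rewrite mderiv_comp big_split_ord /= [X in _ + X]big1 ?addr0; last first.
  by move=> j _; rewrite tnth_mktuple split_r raddf0 mulr0.
rewrite (bigD1 i) //= big1 ?addr0 => [|j ne].
  by rewrite tnth_mktuple split_l mderivXU eqxx mulr1.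
by rewrite tnth_mktuple split_l mderivXU (negbTE ne) mulr0.
Qed.

Lemma rY_Dop (g : Pn) (f : PY) : rY (Dop (iY g) f) = Dop g (rY f).
Proof.
elim/mpoly_gen_ind: g f => [c|i|a b Ha Hb|a b Ha Hb] f.
- by rewrite comp_mpolyC !DopC comp_mpolyZ.
- by rewrite iY_X /xv !DopXU rY_dx.
- by rewrite rmorphD !DopD1 rmorphD /= Ha Hb.
- by rewrite rmorphM !DopM /= Ha Hb.
Qed.

Lemma meval0_rY (F : PY) : F.@[fun _ => 0] = (rY F).@[fun _ => 0].
Proof.
rewrite comp_mpoly_meval; apply: meval_eq => v.
by rewrite tnth_mktuple; case: (split v) => [i|j]; rewrite ?mevalXU ?meval0.
Qed.

Lemma pairing_iY (f : PY) (g : Pn) : pairing f (iY g) = (Dop g (rY f)).@[fun _ => 0].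
Proof. by rewrite pairingE meval0_rY rY_Dop. Qed.

End Glue.

Section Lam.
Variables (C : numClosedFieldType) (n : nat).

Local Notation PY := {mpoly C[n + n]}.
Local Notation PL := {mpoly C[n + n.-1]}.
Local Notation Pn := {mpoly C[n]}.
Local Notation iY := (comp_mpoly (iY_t C n)).
Local Notation rY := (comp_mpoly (rY_t C n)).
Local Notation iL := (comp_mpoly (iL_t C n)).
Local Notation rL := (comp_mpoly (rL_t C n)).
Local Notation IL := (@in_esym_ideal C n).

Lemma dlam_iL (j : 'I_n.-1) (p : Pn) : (iL p)^`M(rshift n j) = 0.
Proof.
rewrite mderiv_comp big1 // => i _.
by rewrite tnth_mktuple /xt mderivXU eq_lrshift mulr0.
Qed.

Lemma dlam_phi (j : 'I_n.-1) i : (phi (xt C i))^`M(rshift n j) = xt C i ^+ j.+1.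
Proof.
rewrite /phi (big_morph (mderiv (rshift n j)) (mderivD _) (mderiv0 _ _)) (bigD1 j) //= big1 ?addr0 => [|j' ne].
  rewrite mderivM -(iL_X C i) -rmorphXn dlam_iL mulr0 addr0.
  by rewrite /lam mderivXU eqxx mul1r.
rewrite mderivM -(iL_X C i) -rmorphXn dlam_iL mulr0 addr0.
by rewrite /lam mderivXU eq_rshift (negbTE ne) mul0r.
Qed.

Definition Fop k (f : PY) : PY := \sum_(i < n) xv C i ^+ k * f^`M(rshift n i).

Lemma subst_phi_xv (i : 'I_n) : subst_phi (xv C i) = xt C i.
Proof. by rewrite subst_phiE /xv compXU tnth_mktuple /subst_var split_l. Qed.

Lemma subst_phi_Fop (j : 'I_n.-1) (f : PY) :
  (subst_phi f)^`M(rshift n j) = subst_phi (Fop j.+1 f).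
Proof.
rewrite subst_phiE mderiv_comp big_split_ord /= big1 ?add0r; last first.
  by move=> i _; rewrite tnth_mktuple /subst_var split_l /xt mderivXU eq_lrshift mulr0.
rewrite /Fop subst_phiE rmorph_sum; apply: eq_bigr => i _.
rewrite tnth_mktuple /subst_var split_r dlam_phi rmorphM rmorphXn /=.
by rewrite -!subst_phiE subst_phi_xv mulrC.
Qed.

Lemma IL0 : IL 0.
Proof. by exists (fun _ => 0); rewrite big1 // => i _; rewrite mul0r. Qed.

Lemma ILD P Q : IL P -> IL Q -> IL (P + Q).
Proof.
case=> q1 -> [q2 ->]; exists (fun i => q1 i + q2 i).
by rewrite -big_split; apply: eq_bigr => i _; rewrite mulrDl.
Qed.

Lemma ILMl R P : IL P -> IL (R * P).
Proof.
case=> q ->; exists (fun i => R * q i).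
by rewrite mulr_sumr; apply: eq_bigr => i _; rewrite mulrA.
Qed.

Lemma ILZ c P : IL P -> IL (c *: P).
Proof. by move=> H; rewrite -mul_mpolyC; apply: ILMl. Qed.

Lemma IL_sum (I : Type) (r : seq I) (F : I -> PL) :
  (forall i, IL (F i)) -> IL (\sum_(i <- r) F i).
Proof. by move=> H; elim/big_rec: _ => [|i x _ Hx]; [exact: IL0 | apply: ILD]. Qed.

Lemma IL_dlam (j : 'I_n.-1) P : IL P -> IL (P^`M(rshift n j)).
Proof.
case=> q ->; exists (fun i => (q i)^`M(rshift n j)).
rewrite (big_morph (mderiv (rshift n j)) (mderivD _) (mderiv0 _ _)); apply: eq_bigr => i _.
by rewrite mderivM -iL_mesym dlam_iL mulr0 addr0.
Qed.

Lemma IL_iL p : inI p -> IL (iL p).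
Proof.
case=> q ->; exists (fun i => iL (q i)).
by rewrite rmorph_sum; apply: eq_bigr => i _; rewrite rmorphM /= iL_mesym.
Qed.

Lemma IL_rL P : IL P -> inI (rL P).
Proof.
case=> q ->; exists (fun i => rL (q i)).
rewrite rmorph_sum; apply: eq_bigr => i _; rewrite rmorphM /= -iL_mesym.
by rewrite rL_iL.
Qed.

End Lam.

Section Psi.
Variables (C : numClosedFieldType) (n : nat).

Local Notation PL := {mpoly C[n + n.-1]}.
Local Notation Pn := {mpoly C[n]}.
Local Notation iL := (comp_mpoly (iL_t C n)).
Local Notation rL := (comp_mpoly (rL_t C n)).
Local Notation IL := (@in_esym_ideal C n).

Definition ldeg (m : 'X_{1..n + n.-1}) : nat := (\sum_(j < n.-1) m (rshift n j))%N.

Definition psi (P : PL) : PL := \sum_(m <- msupp P) (P@_m / (ldeg m)%:R) *: 'X_[m].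

Lemma psiE P (K : nat) : (msize P <= K)%N ->
  psi P = \sum_(m : 'X_{1..(n + n.-1) < K}) (P@_m / (ldeg m)%:R) *: 'X_[m].
Proof.
move=> le; rewrite /psi (@msupp_sum_bnd _ _ _ (fun m c => (c / (ldeg m)%:R) *: 'X_[m]) P K le) //.
by move=> m; rewrite mul0r scale0r.
Qed.

Lemma psi_lin c P Q : psi (c *: P + Q) = c *: psi P + psi Q.
Proof.
pose K := (msize P + msize Q + msize (c *: P + Q)).+1.
have H1 : (msize P <= K)%N by rewrite /K; lia.
have H2 : (msize Q <= K)%N by rewrite /K; lia.
have H3 : (msize (c *: P + Q) <= K)%N by rewrite /K; lia.
rewrite !(@psiE _ K) // scaler_sumr -big_split /=; apply: eq_bigr => m _.
by rewrite mcoeffD mcoeffZ mulrDl scalerDl scalerA mulrA.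
Qed.

Lemma psi0 : psi 0 = 0.
Proof. by rewrite /psi msupp0 big_nil. Qed.

Lemma psiD P Q : psi (P + Q) = psi P + psi Q.
Proof. by have := psi_lin 1 P Q; rewrite !scale1r. Qed.

Lemma psiZ c P : psi (c *: P) = c *: psi P.
Proof. by rewrite -[c *: P]addr0 psi_lin psi0 addr0. Qed.

Lemma psi_sum (I : Type) (r : seq I) (F : I -> PL) :
  psi (\sum_(i <- r) F i) = \sum_(i <- r) psi (F i).
Proof. by elim/big_rec2: _ => [|i x y _ <-]; rewrite ?psi0 ?psiD. Qed.

Lemma psiX m : psi 'X_[m] = ((ldeg m)%:R^-1) *: 'X_[m].
Proof. by rewrite /psi msuppX big_seq1 mcoeffX eqxx mul1r. Qed.

Definition extm (a : 'X_{1..n}) : 'X_{1..n + n.-1} :=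
  [multinom (match split v with inl i => a i | inr _ => 0%N end) | v < n + n.-1].

Lemma ldeg_extm a : ldeg (extm a) = 0%N.
Proof. by rewrite /ldeg big1 // => j _; rewrite mnmE split_r. Qed.

Lemma ldegD m1 m2 : ldeg (m1 + m2)%MM = (ldeg m1 + ldeg m2)%N.
Proof. by rewrite /ldeg -big_split /=; apply: eq_bigr => j _; rewrite mnmDE. Qed.

Lemma iL_XX a : iL 'X_[a] = 'X_[extm a].
Proof.
rewrite comp_mpolyX [RHS]mpolyXE_id big_split_ord /= [X in _ = _ * X]big1 ?mulr1.
  by apply: eq_bigr => i _; rewrite tnth_mktuple mnmE split_l.
by move=> j _; rewrite mnmE split_r expr0.
Qed.

Lemma psi_mul_iL (q : PL) (g : Pn) : psi (q * iL g) = psi q * iL g.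
Proof.
move: q; apply: (@lin_ext C _ _ (fun q => psi (q * iL g)) (fun q => psi q * iL g)).
- by move=> c p q; rewrite mulrDl -scalerAl psi_lin.
- by move=> c p q; rewrite psi_lin mulrDl scalerAl.
move=> m; move: g.
apply: (@lin_ext C _ _ (fun g => psi ('X_[m] * iL g)) (fun g => psi 'X_[m] * iL g)).
- by move=> c p q; rewrite rmorphD /= comp_mpolyZ mulrDr -scalerAr psi_lin.
- by move=> c p q; rewrite rmorphD /= comp_mpolyZ mulrDr scalerAr.
move=> a; rewrite !iL_XX -mpolyXD !psiX -scalerAl -mpolyXD ldegD ldeg_extm addn0.
by [].
Qed.

Definition Eu (P : PL) : PL := \sum_(j < n.-1) lam C j * P^`M(rshift n j).

Lemma EuX m : Eu 'X_[m] = (ldeg m)%:R *: 'X_[m].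
Proof.
rewrite /Eu /ldeg natr_sum scaler_suml; apply: eq_bigr => j _.
rewrite mderivX -scalerAr /lam.
case: (posnP (m (rshift n j))) => [->|pos]; first by rewrite !scale0r.
congr (_ *: _); rewrite -mpolyXD; congr 'X_[_].
apply/mnmP => l; rewrite mnmDE mnmBE mnm1E.
case: eqP => [<-|_]; [by rewrite add1n subn1 prednK | by rewrite subn0].
Qed.

Lemma rhoX m : iL (rL 'X_[m]) = if ldeg m == 0%N then 'X_[m] else 0.
Proof.
rewrite comp_mpolyX big_split_ord /=.
case: eqP => [H|H].
  have H0 : forall j : 'I_n.-1, m (rshift n j) = 0%N.
    move=> j; apply/eqP; move: H => /eqP; rewrite /ldeg sum_nat_eq0 => /forallP /(_ j).
    by [].
  rewrite [X in _ * X]big1 ?mulr1; last by move=> j _; rewrite H0 expr0.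
  rewrite rmorph_prod [RHS]mpolyXE_id big_split_ord /= [X in _ = _ * X]big1 ?mulr1.
    by apply: eq_bigr => i _; rewrite tnth_mktuple split_l rmorphXn /= iL_X.
  by move=> j _; rewrite H0 expr0.
have : ~~ [forall j : 'I_n.-1, m (rshift n j) == 0%N].
  apply/negP => /forallP Hn; apply: H; apply/eqP.
  by rewrite /ldeg sum_nat_eq0; apply/forallP => j; exact: Hn j.
rewrite negb_forall => /existsP [j Hj].
rewrite [X in _ * X](bigD1 j) //= tnth_mktuple split_r expr0n (negbTE Hj) mul0r mulr0.
by rewrite raddf0.
Qed.

Lemma decomp_rho (P : PL) : P = iL (rL P) + psi (Eu P).
Proof.
move: P; apply: (@lin_ext C _ _ id (fun P => iL (rL P) + psi (Eu P))).
- by [].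
- move=> c p q; rewrite !rmorphD /= !comp_mpolyZ /Eu.
  have -> : \sum_(j < n.-1) lam C j * (c *: p + q)^`M(rshift n j) =
     c *: \sum_(j < n.-1) lam C j * p^`M(rshift n j) + \sum_(j < n.-1) lam C j * q^`M(rshift n j).
    rewrite scaler_sumr -big_split /=; apply: eq_bigr => j _.
    by rewrite mderivD mderivZ mulrDr scalerAr.
  rewrite psi_lin scalerDr; ring.
move=> m; rewrite rhoX EuX psiZ psiX scalerA /=.
case: eqP => [->|H]; first by rewrite mul0r scale0r addr0.
by rewrite divff ?scale1r ?add0r // pnatr_eq0; apply/eqP.
Qed.

Lemma IL_lam (P : PL) : IL (iL (rL P)) ->
  (forall j : 'I_n.-1, IL (P^`M(rshift n j))) -> IL P.
Proof.
move=> H1 H2; rewrite [P]decomp_rho; apply: ILD => //.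
have : IL (Eu P) by apply: IL_sum => j; apply: ILMl.
case=> q ->; rewrite psi_sum; apply: IL_sum => i.
rewrite -iL_mesym psi_mul_iL; apply: ILMl; apply: IL_iL; apply: inI_mesym.
by have := ltn_ord i; lia.
Qed.

End Psi.

Section Main.
Variables (C : numClosedFieldType) (n : nat).

Local Notation PY := {mpoly C[n + n]}.
Local Notation PL := {mpoly C[n + n.-1]}.
Local Notation Pn := {mpoly C[n]}.
Local Notation iY := (comp_mpoly (iY_t C n)).
Local Notation rY := (comp_mpoly (rY_t C n)).
Local Notation iL := (comp_mpoly (iL_t C n)).
Local Notation rL := (comp_mpoly (rL_t C n)).
Local Notation IL := (@in_esym_ideal C n).
Local Notation Fk := (@Fop C n).
Local Notation pr := (@pairing C n).

Lemma prDr f g1 g2 : pr f (g1 + g2) = pr f g1 + pr f g2.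
Proof. by rewrite !pairingE DopD1 mevalD. Qed.
Lemma prZr f c g : pr f (c *: g) = c * pr f g.
Proof. by rewrite !pairingE DopZ1 mevalZ. Qed.
Lemma prDl f1 f2 g : pr (f1 + f2) g = pr f1 g + pr f2 g.
Proof. by rewrite !pairingE DopD2 mevalD. Qed.
Lemma prZl c f g : pr (c *: f) g = c * pr f g.
Proof. by rewrite !pairingE DopZ2 mevalZ. Qed.
Lemma pr0r f : pr f 0 = 0.
Proof. by rewrite pairingE Dop01 meval0. Qed.
Lemma pr0l g : pr 0 g = 0.
Proof. by rewrite pairingE Dop02 meval0. Qed.
Lemma pr_sumr f (I : Type) (r : seq I) (G : I -> PY) :
  pr f (\sum_(i <- r) G i) = \sum_(i <- r) pr f (G i).
Proof. by elim/big_rec2: _ => [|i x y _ <-]; rewrite ?pr0r ?prDr. Qed.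
Lemma pr_suml g (I : Type) (r : seq I) (F : I -> PY) :
  pr (\sum_(i <- r) F i) g = \sum_(i <- r) pr (F i) g.
Proof. by elim/big_rec2: _ => [|i x y _ <-]; rewrite ?pr0l ?prDl. Qed.

Lemma pr_mulX v f g : pr f ('X_v * g) = pr (f^`M(v)) g.
Proof. by rewrite !pairingE mulrC DopM DopXU. Qed.

Lemma pr_deriv v f g : pr f (g^`M(v)) = pr ('X_v * f) g.
Proof.
rewrite !pairingE Dop_eval_sym -DopXU -DopM Dop_eval_sym.
by rewrite mulrC.
Qed.

Inductive in_ADJ : (PY -> PY) -> Prop :=
  | ADJ_scal (c : C) : in_ADJ (fun p => c *: p)
  | ADJ_x (i : 'I_n) : in_ADJ (fun p => xv C i * p)
  | ADJ_F (k : nat) : (1 <= k)%N -> (k <= n.-1)%N -> in_ADJ (Fk k)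
  | ADJ_add D1 D2 : in_ADJ D1 -> in_ADJ D2 -> in_ADJ (fun p => D1 p + D2 p)
  | ADJ_comp D1 D2 : in_ADJ D1 -> in_ADJ D2 -> in_ADJ (fun p => D1 (D2 p))
  | ADJ_ext D1 D2 : (forall p, D1 p = D2 p) -> in_ADJ D1 -> in_ADJ D2.

Lemma pr_iter_dx i k h g : pr h (iter k (@dx C n i) g) = pr (xv C i ^+ k * h) g.
Proof.
elim: k h => [|k IH] h; first by rewrite expr0 mul1r.
by rewrite iterS /dx pr_deriv IH exprSr -mulrA.
Qed.

Lemma adj1 D : in_OPalg D -> exists D', in_ADJ D' /\ forall f g, pr f (D g) = pr (D' f) g.
Proof.
elim=> [c|i|k k1 kn|D1 D2 _ [E1 [H1 e1]] _ [E2 [H2 e2]]|D1 D2 _ [E1 [H1 e1]] _ [E2 [H2 e2]]].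
- by exists (fun p => c *: p); split; [constructor | move=> f g; rewrite prZr prZl].
- exists (fun p => xv C i * p); split; first by constructor.
  by move=> f g; rewrite /dx pr_deriv.
- exists (Fk k); split; first by constructor.
  move=> f g; rewrite /Eop pr_sumr /Fop pr_suml; apply: eq_bigr => i _.
  by rewrite /yv pr_mulX pr_iter_dx.
- exists (fun p => E1 p + E2 p); split; first by constructor.
  by move=> f g; rewrite prDr prDl e1 e2.
- exists (fun p => E2 (E1 p)); split; first by constructor.
  by move=> f g; rewrite e1 e2.
Qed.

Lemma adj2 D' : in_ADJ D' -> exists D, in_OPalg D /\ forall f g, pr (D' f) g = pr f (D g).
Proof.
elim=> [c|i|k k1 kn|D1 D2 _ [E1 [H1 e1]] _ [E2 [H2 e2]]|D1 D2 _ [E1 [H1 e1]] _ [E2 [H2 e2]]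
       |D1 D2 e _ [E [H e']]].
- by exists (fun p => c *: p); split; [constructor | move=> f g; rewrite prZr prZl].
- exists (@dx C n i); split; first by constructor.
  by move=> f g; rewrite /dx pr_deriv.
- exists (@Eop C n k); split; first by constructor.
  move=> f g; rewrite /Eop pr_sumr /Fop pr_suml; apply: eq_bigr => i _.
  by rewrite /yv pr_mulX pr_iter_dx.
- exists (fun p => E1 p + E2 p); split; first by constructor.
  by move=> f g; rewrite prDr prDl e1 e2.
- exists (fun p => E2 (E1 p)); split; first by constructor.
  by move=> f g; rewrite e1 e2.
- by exists E; split => // f g; rewrite -e.
Qed.

Lemma good_closure D : in_ADJ D -> forall f, IL (subst_phi f) -> IL (subst_phi (D f)).
Proof.
elim=> [c|i|k k1 kn|D1 D2 _ H1 _ H2|D1 D2 _ H1 _ H2|D1 D2 e _ H] f Hf.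
- by rewrite subst_phiE comp_mpolyZ -subst_phiE; apply: ILZ.
- by rewrite subst_phiE rmorphM /= -!subst_phiE subst_phi_xv; apply: ILMl.
- have kn' : (k.-1 < n.-1)%N by lia.
  have -> : k = (Ordinal kn').+1 by rewrite /= prednK.
  by rewrite -subst_phi_Fop; apply: IL_dlam.
- by rewrite subst_phiE rmorphD /= -!subst_phiE; apply: ILD; [apply: H1 | apply: H2].
- by apply: H1; apply: H2.
- by rewrite -e; apply: H.
Qed.

Lemma good_pr h : IL (subst_phi h) -> pr h (Delta C n) = 0.
Proof.
move=> Hh; rewrite -iY_Vdm pairing_iY Dop_eval_sym.
have : inI (rY h) by rewrite -rL_subst; apply: IL_rL.
by move/core => ->; rewrite meval0.
Qed.

Definition QQ (f : PY) := forall D, in_ADJ D -> pr (D f) (Delta C n) = 0.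

Lemma ADJ_iY (q : Pn) : in_ADJ (fun p => iY q * p).
Proof.
elim/mpoly_gen_ind: q => [c|i|a b Ha Hb|a b Ha Hb].
- by apply: (ADJ_ext _ (ADJ_scal c)) => p; rewrite comp_mpolyC mul_mpolyC.
- by apply: (ADJ_ext _ (ADJ_x i)) => p; rewrite iY_X.
- by apply: (ADJ_ext _ (ADJ_add Ha Hb)) => p; rewrite rmorphD mulrDl.
- by apply: (ADJ_ext _ (ADJ_comp Ha Hb)) => p; rewrite rmorphM mulrA.
Qed.

Lemma Q_rY f : QQ f -> inI (rY f).
Proof.
move=> Qf; apply/core/Dop_eval_zero => m.
rewrite -DopM Dop_eval_sym -(rY_iY ('X_[m] : Pn)) -rmorphM /= -pairing_iY iY_Vdm.
exact: (Qf _ (ADJ_iY 'X_[m])).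
Qed.

Lemma msize_le0 (P : PL) : (msize P <= 0)%N -> P = 0.
Proof.
move=> H; apply/mpolyP => m; rewrite mcoeff0; apply/eqP; rewrite mcoeff_eq0.
by apply: msize_mdeg_ge; lia.
Qed.

Lemma msize_mderiv (P : PL) v : (msize (P^`M(v)) <= (msize P).-1)%N.
Proof.
rewrite [X in (X <= _)%N]msizeE; apply/bigmax_leqP_seq => m hm _.
move: hm; rewrite mcoeff_msupp mcoeff_mderiv => H.
have : (m + U_(v))%MM \in msupp P.
  rewrite mcoeff_msupp; apply: contraNneq H => ->; by rewrite mul0rn.
move/msize_mdeg_lt; rewrite mdegD mdeg1; lia.
Qed.

Lemma main_ind K f : (msize (subst_phi f) <= K)%N -> QQ f -> IL (subst_phi f).
Proof.
elim: K f => [|K IH] f hK Qf.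
  by rewrite (msize_le0 hK); apply: IL0.
apply: IL_lam.
  by rewrite rL_subst; apply: IL_iL; apply: Q_rY.
move=> j; rewrite subst_phi_Fop; apply: IH.
  by rewrite -subst_phi_Fop (leq_trans (msize_mderiv _ _)) //; lia.
move=> D HD; apply: (Qf (fun p => D (Fk j.+1 p))).
by apply: ADJ_comp => //; constructor => //; have := ltn_ord j; lia.
Qed.

End Main.

Unset Implicit Arguments.
Set Strict Implicit.

Theorem proposition4p4 (C : numClosedFieldType) (n : nat) (f : PXY C n) :
  in_OP_perp f <-> in_esym_ideal (subst_phi f).
Proof.
split.
- move=> Hp; apply: (@main_ind C n _ f (leqnn _)) => D HD.
  have [D0 [HD0 e]] := adj2 HD; rewrite e; apply: Hp.
  by exists D0; split.
- move=> Hg g [D [HD ->]].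
  have [D' [HD' e]] := adj1 HD; rewrite e.
  by apply: good_pr; apply: good_closure.
Qed.
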